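(* Let $(X,Y)$ be a random pair in $\mathbb{R}^d\times\mathbb{R}$ with law $\rho$ such that $\|X\|^2\le K$ almost surely, and let $\Sigma=\mathbb{E}[XX^\top]$ and $L(\theta)=\frac12\mathbb{E}[(\langle\theta,X\rangle-Y)^2]$. For $\theta\in\mathbb{R}^d$ let $r_X(\theta)=\langle\theta,X\rangle-Y$ and $$\sigma(\theta)=\Big(\mathbb{E}[r_X(\theta)^2XX^\top]-\mathbb{E}[r_X(\theta)X]\,\mathbb{E}[r_X(\theta)X]^\top\Big)^{1/2}$$ (positive semidefinite square root). Assume there exists $a>0$ such that for all $\theta\in\mathbb{R}^d$, $\sigma(\theta)^2\succcurlyeq a^2L(\theta)I_d$ and $L(\theta)\ge a^2$. Then there exists a constant $c>0$ depending only on $\rho$ such that for all $\theta,\eta\in\mathbb{R}^d$, $$\|\sigma(\theta)-\sigma(\eta)\|_{\mathrm{HS}}^2\le 2cK\,\langle\Sigma(\theta-\eta),\theta-\eta\rangle.$$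
   Context: $\|\cdot\|_{\mathrm{HS}}$ is the Hilbert–Schmidt (Frobenius) norm; $\succcurlyeq$ is the Loewner order on symmetric matrices. *)

(* Defs.v *)
From HB Require Import structures.
From mathcomp Require Import all_boot all_order all_algebra.
From mathcomp Require Import all_classical all_reals all_analysis.
Set Implicit Arguments. Unset Strict Implicit. Unset Printing Implicit Defensive.
Import Order.TTheory GRing.Theory Num.Theory.
Local Open Scope ring_scope.

Definition psd (R : realType) (n : nat) (S : 'M[R]_n) : Prop :=
  S^T = S /\ forall v : 'cV[R]_n, 0 <= (v^T *m S *m v) 0 0.

Definition loewner_ge (R : realType) (n : nat) (A B : 'M[R]_n) : Prop :=
  psd (A - B).

(* The positive semidefinite square root: the (unique, when M is PSD) PSD
   matrix S with S * S = M (chosen classically; 0 if none exists). *)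
Definition psd_sqrt (R : realType) (n : nat) (M : 'M[R]_n) : 'M[R]_n :=
  xget 0 [set S : 'M[R]_n | psd S /\ S *m S = M].

Definition hs2 (R : realType) (m n : nat) (A : 'M[R]_(m, n)) : R :=
  \sum_i \sum_j (A i j) ^+ 2.

Section Model.
Context {dT : measure_display} {T : measurableType dT} {R : realType}
  (P : probability T R) (d : nat) (X : 'I_d -> T -> R) (Y : T -> R).

Definition Ex (f : T -> R) : R := fine ('E_P[f])%E.

Definition Emx m n (F : T -> 'M[R]_(m, n)) : 'M[R]_(m, n) :=
  \matrix_(i, j) Ex (fun w => F w i j).

Definition Xv (w : T) : 'cV[R]_d := \col_i X i w.

Definition resid (theta : 'cV[R]_d) (w : T) : R :=
  \sum_i theta i 0 * X i w - Y w.

Definition Sigma : 'M[R]_d := Emx (fun w => Xv w *m (Xv w)^T).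

Definition Lrisk (theta : 'cV[R]_d) : R :=
  Ex (fun w => resid theta w ^+ 2) / 2.

Definition Erx (theta : 'cV[R]_d) : 'cV[R]_d :=
  Emx (fun w => resid theta w *: Xv w).

Definition covmat (theta : 'cV[R]_d) : 'M[R]_d :=
  Emx (fun w => (resid theta w ^+ 2) *: (Xv w *m (Xv w)^T))
  - Erx theta *m (Erx theta)^T.

Definition sigma_noise (theta : 'cV[R]_d) : 'M[R]_d := psd_sqrt (covmat theta).

End Model.

(* Main.v *)
Require Import Defs.
From HB Require Import structures.
From mathcomp Require Import all_boot all_order all_algebra.
From mathcomp Require Import all_classical all_reals all_analysis.
From mathcomp Require Import ring lra.
From mathcomp Require Import measurable_realfun.
Import Order.TTheory GRing.Theory Num.Theory.
Local Open Scope ring_scope.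

Section Aux.
Set Implicit Arguments.
Unset Strict Implicit.

Lemma disc_le (R : realFieldType) (p b r : R) : 0 <= p -> 0 <= r ->
  (forall t, 0 <= p + 2 * b * t + r * t ^+ 2) -> b ^+ 2 <= p * r.
Proof.
move=> p0 r0.
have [->|rne0] := eqVneq r 0 => H.
  have [->|bne0] := eqVneq b 0; first by rewrite expr0n /= mulr0.
  have := H (- (p + 1) / (2 * b)).
  have -> : p + 2 * b * (- (p + 1) / (2 * b)) + 0 * (- (p + 1) / (2 * b)) ^+ 2 = -1.
    by field.
  by move=> h; exfalso; lra.
have rp : 0 < r by rewrite lt_def rne0.
have := H (- b / r).
have -> : p + 2 * b * (- b / r) + r * (- b / r) ^+ 2 = (p * r - b ^+ 2) / r by field.
by rewrite ler_pdivlMr // mul0r subr_ge0.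
Qed.

Lemma cs_fin (R : realFieldType) (I : finType) (a b : I -> R) :
  (\sum_i a i * b i) ^+ 2 <= (\sum_i a i ^+ 2) * (\sum_i b i ^+ 2).
Proof.
apply: disc_le; try by apply: sumr_ge0 => i _; rewrite sqr_ge0.
move=> t.
have -> : (\sum_i a i ^+ 2) + 2 * (\sum_i a i * b i) * t + (\sum_i b i ^+ 2) * t ^+ 2
  = \sum_i (a i + t * b i) ^+ 2.
  transitivity (\sum_i (a i ^+ 2 + (2 * t) * (a i * b i) + t ^+ 2 * b i ^+ 2)).
    by rewrite !big_split /= -!mulr_sumr; ring.
  by apply: eq_bigr => i _; ring.
by apply: sumr_ge0 => i _; rewrite sqr_ge0.
Qed.

Lemma cs_fin2 (R : realFieldType) (I J : finType) (a b : I -> J -> R) :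
  (\sum_i \sum_j a i j * b i j) ^+ 2 <=
  (\sum_i \sum_j a i j ^+ 2) * (\sum_i \sum_j b i j ^+ 2).
Proof.
rewrite !pair_bigA /=.

have := @cs_fin R _ (fun p : I * J => a p.1 p.2) (fun p => b p.1 p.2).
by [].

Qed.

Definition hsq (R : realFieldType) (I : finType) (x : I -> R) := \sum_i x i ^+ 2.
Arguments hsq {R I}.

Lemma cs_W (R : realFieldType) (I J : finType) (W : I -> J -> R) x y :
  (\sum_i \sum_j W i j * (x i * y j)) ^+ 2 <=
  (\sum_i \sum_j W i j ^+ 2) * (hsq x * hsq y).
Proof.
apply: le_trans (cs_fin2 _ _) _.
rewrite le_eqVlt; apply/orP; left; apply/eqP; congr (_ * _).
rewrite /hsq mulr_suml; apply: eq_bigr => i _; rewrite mulr_sumr; apply: eq_bigr => j _.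
by rewrite exprMn.
Qed.

End Aux.


Section Mx.
Set Implicit Arguments.
Unset Strict Implicit.
Variable R : realType.
Variable n : nat.
Implicit Types (A B : 'M[R]_n) (v w : 'cV[R]_n).

Definition qm A v := (v^T *m A *m v) 0 0.
Definition nv v := (v^T *m v) 0 0.

Lemma bilE v A w : (v^T *m A *m w) 0 0 = \sum_i \sum_j A i j * (v i 0 * w j 0).
Proof.
rewrite mxE; under eq_bigr => j _ do rewrite mxE mulr_suml.
rewrite exchange_big; apply: eq_bigr => i _; apply: eq_bigr => j _.
by rewrite mxE; ring.
Qed.

Lemma nvE v : nv v = hsq (fun i => v i 0).
Proof. by rewrite /nv /hsq mxE; apply: eq_bigr => i _; rewrite mxE expr2. Qed.

Lemma nv_ge0 v : 0 <= nv v.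
Proof. by rewrite nvE; apply: sumr_ge0 => i _; rewrite sqr_ge0. Qed.

Lemma bil_sym A v w : A^T = A -> (v^T *m A *m w) 0 0 = (w^T *m A *m v) 0 0.
Proof.
move=> sA.
have h (M : 'M[R]_1) : M 0 0 = (M^T) 0 0 by rewrite [RHS]mxE.
by rewrite h !trmx_mul trmxK sA mulmxA.
Qed.

Lemma psd_cs A v w : psd A ->
  ((v^T *m A *m w) 0 0) ^+ 2 <= qm A v * qm A w.
Proof.
move=> [sA pA].
apply: disc_le; [exact: pA | exact: pA |] => t.
have := pA (v + t *: w).
have e : (w^T *m A *m v) 0 0 = (v^T *m A *m w) 0 0 by rewrite bil_sym.
move: e; rewrite !bilE => e.
suff -> : \sum_i \sum_j A i j * ((v + t *: w) i 0 * (v + t *: w) j 0) =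
  \sum_i \sum_j A i j * (v i 0 * v j 0) + t * (\sum_i \sum_j A i j * (v i 0 * w j 0))
  + t * (\sum_i \sum_j A i j * (w i 0 * v j 0)) + t ^+ 2 * (\sum_i \sum_j A i j * (w i 0 * w j 0)).
  rewrite /qm !bilE e => h; apply: (le_trans h); rewrite le_eqVlt; apply/orP; left; apply/eqP; ring.
rewrite !mulr_sumr -!big_split /=; apply: eq_bigr => i _.
rewrite !mulr_sumr -!big_split /=; apply: eq_bigr => j _.
rewrite !mxE; ring.
Qed.

Lemma qm_ge0 A v : psd A -> 0 <= qm A v.
Proof. by case=> _ h; exact: h. Qed.

Lemma hs2_ge0 m (A : 'M[R]_(m, n)) : 0 <= hs2 A.
Proof. by apply: sumr_ge0 => i _; apply: sumr_ge0 => j _; rewrite sqr_ge0. Qed.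

Lemma key_sqrt A (al M : R) : psd A -> 0 <= al ->
  (forall v, al * nv v <= qm (A *m A) v) -> hs2 A <= M ->
  forall v, al ^+ 2 * (nv v) ^+ 2 <= M * (qm A v) ^+ 2.
Proof.
move=> pA al0 hal hM v.
have [sA _] := pA.
set w := A *m v.
have t_eq : qm (A *m A) v = nv w.
  by rewrite /nv /qm /w trmx_mul sA !mulmxA.
have bil_eq : (v^T *m A *m w) 0 0 = nv w by rewrite /w mulmxA -t_eq /qm mulmxA.
have cs1 := psd_cs v w pA; rewrite bil_eq in cs1.
have cs2 : (qm A w) ^+ 2 <= hs2 A * (nv w * nv w).
  by rewrite /qm bilE !nvE; exact: cs_W.
have := hal v; rewrite t_eq => h.
have p0 := qm_ge0 v pA; have m0 := qm_ge0 w pA.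
have t0 := nv_ge0 w; have n0 := nv_ge0 v; have H0 := hs2_ge0 A.
move: cs1 cs2 h p0 m0 t0 n0 H0 hM.
set p := qm A v; set m := qm A w; set t := nv w; set nn := nv v; set H := hs2 A.
move=> cs1 cs2 h p0 m0 t0 n0 H0 hM.
have an0 : 0 <= al * nn by rewrite mulr_ge0.
have e1 : (al * nn) ^+ 2 <= t ^+ 2 by rewrite ler_pXn2r // ?nnegrE // (le_trans an0).
have [t00|tp] := eqVneq t 0.
  rewrite -exprMn.
  have -> : al * nn = 0 by apply/eqP; rewrite eq_le an0 andbT -t00.
  rewrite expr0n /=; apply: mulr_ge0; first exact: le_trans hM.
  by rewrite sqr_ge0.
have tpos : 0 < t by rewrite lt_def tp t0.
have h1 : t ^+ 2 * t ^+ 2 <= p ^+ 2 * m ^+ 2.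
  rewrite -!exprMn ler_pXn2r // ?nnegrE ?mulr_ge0 //.
have h2 : t ^+ 2 * t ^+ 2 <= p ^+ 2 * H * t ^+ 2.
  apply: le_trans h1 _; rewrite -mulrA; apply: ler_wpM2l; first exact: sqr_ge0.
  by rewrite -expr2 in cs2.
have h3 : t ^+ 2 <= p ^+ 2 * H.
  by rewrite -(ler_pM2r (exprn_gt0 2 tpos)).
rewrite -exprMn; apply: (le_trans e1); apply: (le_trans h3).
rewrite [X in _ <= X]mulrC; apply: ler_wpM2l => //; exact: sqr_ge0.
Qed.


Lemma hs2_cols (D : 'M[R]_n) : hs2 D = \sum_j nv (col j D).
Proof.
rewrite /hs2 exchange_big; apply: eq_bigr => j _; rewrite nvE /hsq.
by apply: eq_bigr => i _; rewrite mxE.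
Qed.

Lemma hs2_rows (D : 'M[R]_n) : hs2 D = \sum_i nv (row i D)^T.
Proof.
rewrite /hs2; apply: eq_bigr => i _; rewrite nvE /hsq.
by apply: eq_bigr => j _; rewrite !mxE.
Qed.

Lemma tr_id A B : \sum_i \sum_j (A - B) i j * (A *m A - B *m B) i j =
  \sum_j qm A (col j (A - B)) + \sum_i qm B ((row i (A - B))^T).
Proof.
transitivity (\sum_i \sum_j \sum_l A i l * ((A - B) i j * (A - B) l j) +
              \sum_i \sum_j \sum_l B l j * ((A - B) i l * (A - B) i j)).
  rewrite -big_split; apply: eq_bigr => i _ /=.
  rewrite -big_split; apply: eq_bigr => j _ /=.
  rewrite [(A *m A - B *m B) i j]mxE !mxE -sumrB mulr_sumr -big_split.
  by apply: eq_bigr => l _ /=; rewrite !mxE; ring.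
congr (_ + _).
  rewrite exchange_big; apply: eq_bigr => j _; rewrite /qm bilE.
  by apply: eq_bigr => i _; apply: eq_bigr => l _; rewrite !mxE.
apply: eq_bigr => i _; rewrite exchange_big /qm bilE.
by apply: eq_bigr => l _; apply: eq_bigr => j _; rewrite !mxE.
Qed.

Lemma lower_cols A (D : 'M[R]_n) (k : R) : (forall v, k * nv v <= qm A v) ->
  k * hs2 D <= \sum_j qm A (col j D).
Proof. by move=> h; rewrite hs2_cols mulr_sumr; apply: ler_sum => j _. Qed.

Lemma lower_rows A (D : 'M[R]_n) (k : R) : (forall v, k * nv v <= qm A v) ->
  k * hs2 D <= \sum_i qm A ((row i D)^T).
Proof. by move=> h; rewrite hs2_rows mulr_sumr; apply: ler_sum => j _. Qed.

Lemma tr_cs (D E : 'M[R]_n) :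
  (\sum_i \sum_j D i j * E i j) ^+ 2 <= hs2 D * hs2 E.
Proof. exact: cs_fin2. Qed.

Lemma qmE A v : (v^T *m A *m v) 0 0 = qm A v.
Proof. by []. Qed.


Lemma loewE A (al : R) v :
  (v^T *m (A ^+ 2 - al%:M) *m v) 0 0 = qm (A *m A) v - al * nv v.
Proof.
have sub11 (M N : 'M[R]_1) : (M - N) 0 0 = M 0 0 - N 0 0 by rewrite !mxE.
rewrite expr2 -mulmxE mulmxBr mulmxBl sub11 mul_mx_scalar -scalemxAl.
by rewrite [X in _ - X]mxE /qm /nv mulmxA.
Qed.

Lemma nv_const1 : nv (const_mx 1) = n%:R.
Proof.
rewrite nvE /hsq (eq_bigr (fun _ => 1)); last by move=> i _; rewrite mxE expr1n.
by rewrite sumr_const card_ord.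
Qed.

Lemma from_sq (al M p nn : R) : 0 <= p -> 0 <= nn -> 0 < M ->
  al ^+ 2 * nn ^+ 2 <= M * p ^+ 2 -> Num.sqrt (al ^+ 2 / M) * nn <= p.
Proof.
move=> p0 n0 M0 h.
have e1 : Num.sqrt (al ^+ 2 / M) * nn = Num.sqrt (al ^+ 2 / M * nn ^+ 2).
  by rewrite (sqrtrM (nn ^+ 2)) ?divr_ge0 ?sqr_ge0 ?ltW // sqrtr_sqr ger0_norm.
have e2 : p = Num.sqrt (p ^+ 2) by rewrite sqrtr_sqr ger0_norm.
rewrite e1 [X in _ <= X]e2 ler_sqrt ?sqr_ge0 //.
rewrite mulrAC ler_pdivrMr //.
by rewrite [X in _ <= X]mulrC.
Qed.

End Mx.


Section Prob.
Set Implicit Arguments.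
Unset Strict Implicit.
Variables (dT : measure_display) (T : measurableType dT) (R : realType)
  (P : probability T R).

Definition I1 (f : T -> R) := P.-integrable setT (EFin \o f).
Definition S2 (f : T -> R) := measurable_fun setT f /\ I1 (fun w => f w ^+ 2).

Lemma I1_fin f : I1 f -> ('E_P[f] \is a fin_num)%E.
Proof. by move=> h; apply: expectation_fin_num; apply/Lfun1_integrable. Qed.

Lemma I1_meas f : I1 f -> measurable_fun setT f.
Proof. by move=> /measurable_int /measurable_EFinP. Qed.

Lemma I1D f g : I1 f -> I1 g -> I1 (fun w => f w + g w).
Proof.
move=> hf hg; have := integrableD measurableT hf hg.
by apply: eq_integrable => // x _ /=; rewrite EFinD.
Qed.

Lemma I1Z k f : I1 f -> I1 (fun w => k * f w).
Proof.
move=> hf; have := integrableZl measurableT k hf.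
by apply: eq_integrable => // x _ /=; rewrite EFinM.
Qed.

Lemma I1B f g : I1 f -> I1 g -> I1 (fun w => f w - g w).
Proof.
move=> hf hg; have := I1D hf (I1Z (-1) hg).
by apply: eq_integrable => // x _ /=; rewrite mulN1r.
Qed.

Lemma I1_cst k : I1 (fun _ => k).
Proof. exact: finite_measure_integrable_cst. Qed.

Lemma I1_sum (I : Type) (s : seq I) (F : I -> T -> R) :
  (forall i, I1 (F i)) -> I1 (fun w => \sum_(i <- s) F i w).
Proof.
move=> h; elim: s => [|i s IH].
  by have := I1_cst 0; apply: eq_integrable => // x _ /=; rewrite big_nil.
by have := I1D (h i) IH; apply: eq_integrable => // x _ /=; rewrite big_cons.
Qed.

Lemma ExD f g : I1 f -> I1 g -> Ex P (fun w => f w + g w) = Ex P f + Ex P g.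
Proof.
move=> hf hg; rewrite /Ex.
have -> : ('E_P[fun w => (f w + g w)%R] = 'E_P[f] + 'E_P[g])%E.
  by apply: expectationD; apply/Lfun1_integrable.
by rewrite fineD // I1_fin.
Qed.

Lemma ExZ k f : I1 f -> Ex P (fun w => k * f w) = k * Ex P f.
Proof.
move=> hf; rewrite /Ex.
have -> : ('E_P[fun w => (k * f w)%R] = k%:E * 'E_P[f])%E.
  transitivity ('E_P[k \o* f])%E.
    by congr expectation; apply: funext => w /=; rewrite mulrC.
  by apply: expectationZl; apply/Lfun1_integrable.
by rewrite fineM // I1_fin.
Qed.

Lemma ExB f g : I1 f -> I1 g -> Ex P (fun w => f w - g w) = Ex P f - Ex P g.
Proof.
move=> hf hg.
have -> : (fun w => f w - g w) = (fun w => f w + (-1) * g w).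
  by apply: funext => w; rewrite mulN1r.
by rewrite ExD ?I1Z // ExZ // mulN1r.
Qed.

Lemma Ex_cst k : Ex P (fun _ => k) = k.
Proof. by rewrite /Ex (_ : (fun _ => k) = cst k) // expectation_cst. Qed.

Lemma Ex_sum (I : Type) (s : seq I) (F : I -> T -> R) :
  (forall i, I1 (F i)) ->
  Ex P (fun w => \sum_(i <- s) F i w) = \sum_(i <- s) Ex P (F i).
Proof.
move=> h; elim: s => [|i s IH].
  have -> : (fun w => \sum_(i <- [::]) F i w) = (fun _ => 0).
    by apply: funext => w; rewrite big_nil.
  by rewrite Ex_cst big_nil.
rewrite big_cons -IH -ExD //; last exact: I1_sum.
by congr Ex; apply: funext => w; rewrite big_cons.
Qed.

Lemma Ex_ge0 f : (forall w, 0 <= f w) -> 0 <= Ex P f.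
Proof. by move=> h; apply: fine_ge0; apply: expectation_ge0. Qed.

Lemma Ex_ge0_ae f : I1 f -> {ae P, forall w, 0 <= f w} -> 0 <= Ex P f.
Proof.
move=> hf hae; rewrite /Ex; apply: fine_ge0.
rewrite unlock.
have mf := I1_meas hf.
rewrite (ae_eq_integral (abse \o (EFin \o f))) //.
- by apply: integral_ge0 => x _; exact: abse_ge0.
- exact/measurable_EFinP.
- by apply: measurableT_comp => //; exact/measurable_EFinP.
- by apply: filterS hae => w h _; rewrite /comp abse_EFin ger0_norm.
Qed.

Lemma Ex_le_ae f g : I1 f -> I1 g -> {ae P, forall w, f w <= g w} ->
  Ex P f <= Ex P g.
Proof.
move=> hf hg hae; rewrite -subr_ge0 -ExB //.
apply: Ex_ge0_ae; first exact: I1B.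
by apply: filterS hae => w; rewrite subr_ge0.
Qed.

Lemma I1_ae (f g : T -> R) : measurable_fun setT f -> I1 g ->
  {ae P, forall w, `|f w| <= g w} -> I1 f.
Proof.
move=> mf hg hae; apply/integrableP; split; first exact/measurable_EFinP.
have /integrableP [mg gfin] := hg.
apply: le_lt_trans gfin.
apply: ae_ge0_le_integral => //;
  try (by move=> x _; apply: abse_ge0);
  try (by apply: measurableT_comp => //; exact/measurable_EFinP).
apply: filterS hae => w h _ /=; rewrite !lee_fin.
apply: le_trans h _; exact: ler_norm.
Qed.


Lemma I1_eq f g : I1 f -> (forall w, f w = g w) -> I1 g.
Proof. by move=> h e; move: h; apply: eq_integrable => // x _ /=; rewrite e. Qed.

Lemma Ex_eq f g : (forall w, f w = g w) -> Ex P f = Ex P g.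
Proof. by move=> e; congr Ex; apply: funext. Qed.

Lemma absM_le (x y : R) : `|x * y| <= x ^+ 2 + y ^+ 2.
Proof.
rewrite normrM -(real_normK (num_real x)) -(real_normK (num_real y)).
have := normr_ge0 x; have := normr_ge0 y; nra.
Qed.

Lemma S2_meas f : S2 f -> measurable_fun setT f.
Proof. by case. Qed.

Lemma S2_I1 f g : S2 f -> S2 g -> I1 (fun w => f w * g w).
Proof.
move=> [mf hf] [mg hg]; apply: (I1_ae (g := fun w => f w ^+ 2 + g w ^+ 2)).
- exact: measurable_funM.
- exact: I1D.
- by apply: aeW => w; exact: absM_le.
Qed.

Lemma S2D f g : S2 f -> S2 g -> S2 (fun w => f w + g w).
Proof.
move=> hf hg; split; first by apply: measurable_funD; apply: S2_meas.
apply: (I1_eq (f := fun w => f w ^+ 2 + (2 * (f w * g w) + g w ^+ 2))).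
  by apply: I1D; [case: hf|apply: I1D; [apply: I1Z; exact: S2_I1|case: hg]].
by move=> w; ring.
Qed.

Lemma S2Z k f : S2 f -> S2 (fun w => k * f w).
Proof.
move=> [mf hf]; split; first by apply: measurable_funM => //; exact: measurable_cst.
apply: (I1_eq (f := fun w => k ^+ 2 * f w ^+ 2)); first exact: I1Z.
by move=> w; ring.
Qed.

Lemma S2_cst k : S2 (fun _ => k).
Proof. split; [exact: measurable_cst | exact: I1_cst]. Qed.

Lemma S2B f g : S2 f -> S2 g -> S2 (fun w => f w - g w).
Proof.
move=> hf hg; have := S2D hf (S2Z (-1) hg).
by congr S2; apply: funext => w; rewrite mulN1r.
Qed.

Lemma S2_sum (I : Type) (s : seq I) (F : I -> T -> R) :
  (forall i, S2 (F i)) -> S2 (fun w => \sum_(i <- s) F i w).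
Proof.
move=> h; elim: s => [|i s IH].
  by have := S2_cst 0; congr S2; apply: funext => w; rewrite big_nil.
by have := S2D (h i) IH; congr S2; apply: funext => w; rewrite big_cons.
Qed.

Lemma S2_mulB f (g : T -> R) (C : R) : S2 f -> measurable_fun setT g ->
  {ae P, forall w, g w ^+ 2 <= C} -> S2 (fun w => f w * g w).
Proof.
move=> [mf hf] mg hae; split; first exact: measurable_funM.
apply: (I1_ae (g := fun w => C * f w ^+ 2)).
- by apply: measurable_funX; exact: measurable_funM.
- exact: I1Z.
- apply: filterS hae => w h.
  rewrite ger0_norm ?sqr_ge0 // exprMn mulrC.
  by apply: ler_wpM2r => //; exact: sqr_ge0.
Qed.

Lemma Ex_cs f g : S2 f -> S2 g ->
  (Ex P (fun w => f w * g w)) ^+ 2 <=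
  Ex P (fun w => f w ^+ 2) * Ex P (fun w => g w ^+ 2).
Proof.
move=> hf hg.
have hfg := S2_I1 hf hg.
have [_ hf2] := hf; have [_ hg2] := hg.
apply: disc_le; [by apply: Ex_ge0 => w; exact: sqr_ge0|by apply: Ex_ge0 => w; exact: sqr_ge0|].
move=> t.
have -> : Ex P (fun w => f w ^+ 2) + 2 * Ex P (fun w => f w * g w) * t +
   Ex P (fun w => g w ^+ 2) * t ^+ 2 =
   Ex P (fun w => f w ^+ 2 + ((2 * t) * (f w * g w) + t ^+ 2 * g w ^+ 2)).
  rewrite ExD //; last by apply: I1D; apply: I1Z.
  rewrite ExD ?I1Z // !ExZ //; ring.
by apply: Ex_ge0 => w; rewrite (_ : _ + _ = (f w + t * g w) ^+ 2); [exact: sqr_ge0| ring].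
Qed.

End Prob.


Section Model2.
Set Implicit Arguments.
Unset Strict Implicit.
Variables (dT : measure_display) (T : measurableType dT) (R : realType)
  (P : probability T R).
Variables (d : nat) (X : 'I_d -> T -> R) (Y : T -> R) (K : R).
Hypotheses (mX : forall i, measurable_fun setT (X i)) (mY : measurable_fun setT Y)
  (hK : {ae P, forall w, \sum_i X i w ^+ 2 <= K}) (hY : I1 P (fun w => Y w ^+ 2)).

Let r th := resid X Y th.
Let m th i := Ex P (fun w => r th w * X i w).

Lemma covmatE th i j : covmat P X Y th i j =
  Ex P (fun w => r th w ^+ 2 * (X i w * X j w)) - m th i * m th j.
Proof.
rewrite /covmat /Erx /Emx !mxE big_ord1 !mxE /m /r.
congr (_ - _ * _); apply: Ex_eq => w; rewrite ?mxE ?big_ord1 ?mxE //.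
Qed.

Lemma SigmaE i j : Sigma P X i j = Ex P (fun w => X i w * X j w).
Proof. by rewrite /Sigma /Emx mxE; apply: Ex_eq => w; rewrite !mxE big_ord1 !mxE. Qed.

Lemma LriskE th : Lrisk P X Y th = Ex P (fun w => r th w ^+ 2) / 2.
Proof. by []. Qed.


Lemma sq_le (h c : R) : 0 <= h -> 0 <= c -> h ^+ 2 <= c * h -> h <= c.
Proof.
move=> h0 c0 hh; have [->|hne] := eqVneq h 0; first by [].
have hp : 0 < h by rewrite lt_def hne h0.
by rewrite -(ler_pM2r hp) -expr2.
Qed.

Lemma K0 : 0 <= K.
Proof.
have : Ex P (fun _ => 0) <= Ex P (fun _ => K).
  apply: Ex_le_ae; [exact: I1_cst|exact: I1_cst|].
  apply: filterS hK => w h; apply: le_trans h.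
  by apply: sumr_ge0 => i _; exact: sqr_ge0.
by rewrite !Ex_cst.
Qed.

Lemma aeX i : {ae P, forall w, X i w ^+ 2 <= K}.
Proof.
apply: filterS hK => w h; apply: le_trans h.
by rewrite (bigD1 i) //= lerDl; apply: sumr_ge0 => j _; exact: sqr_ge0.
Qed.

Lemma SX i : S2 P (X i).
Proof.
have := S2_mulB (S2_cst P 1) (mX i) (aeX i).
by congr S2; apply: funext => w; rewrite mul1r.
Qed.

Lemma SY : S2 P Y.
Proof. by split. Qed.

Lemma Sr th : S2 P (r th).
Proof.
have := S2B (S2_sum (index_enum 'I_d) (fun i => S2Z (th i 0) (SX i))) SY.
by congr S2.
Qed.

Lemma aeXX i j : {ae P, forall w, (X i w * X j w) ^+ 2 <= K * K}.
Proof.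
apply: filterS2 (aeX i) (aeX j) => w hi hj.
by rewrite exprMn; apply: ler_pM => //; exact: sqr_ge0.
Qed.

Lemma S2hXX f i j : S2 P f -> S2 P (fun w => f w * (X i w * X j w)).
Proof. by move=> hf; apply: (S2_mulB hf _ (aeXX i j)); apply: measurable_funM. Qed.

Lemma m2_bound th : hsq (m th) <= K * Ex P (fun w => r th w ^+ 2).
Proof.
set mm := m th.
set V := fun w => \sum_i mm i * X i w.
have SV : S2 P V := S2_sum (index_enum 'I_d) (fun i => S2Z (mm i) (SX i)).
have e : hsq mm = Ex P (fun w => r th w * V w).
  rewrite /hsq.
  transitivity (\sum_i Ex P (fun w => mm i * (r th w * X i w))).
    apply: eq_bigr => i _; rewrite ExZ; first by rewrite expr2.
    exact: S2_I1 (Sr th) (SX i).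
  rewrite -Ex_sum; last by move=> i; apply: I1Z; exact: S2_I1 (Sr th) (SX i).
  by apply: Ex_eq => w; rewrite /V mulr_sumr; apply: eq_bigr => i _; ring.
have hV : Ex P (fun w => V w ^+ 2) <= K * hsq mm.
  rewrite -[X in _ <= X](Ex_cst P).
  apply: Ex_le_ae; [by case: SV|exact: I1_cst|].
  apply: filterS hK => w h.
  apply: le_trans (cs_fin mm (fun i => X i w)) _.
  rewrite mulrC; apply: ler_wpM2r => //.
  by apply: sumr_ge0 => i _; exact: sqr_ge0.
have cs := Ex_cs (Sr th) SV; rewrite -e in cs.
have h0 : 0 <= hsq mm by apply: sumr_ge0 => i _; exact: sqr_ge0.
have e0 : 0 <= Ex P (fun w => r th w ^+ 2) by apply: Ex_ge0 => w; exact: sqr_ge0.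
apply: sq_le => //; first by rewrite mulr_ge0 // K0.
apply: le_trans cs _; rewrite [K * _]mulrC -mulrA.
by apply: ler_wpM2l.
Qed.


Lemma I1rrXX th i j : I1 P (fun w => r th w ^+ 2 * (X i w * X j w)).
Proof.
apply: (I1_eq (S2_I1 (Sr th) (S2hXX i j (Sr th)))) => w; ring.
Qed.

Lemma hs2_sig_bound th (A : 'M[R]_d) : psd A -> A *m A = covmat P X Y th ->
  hs2 A <= K * Ex P (fun w => r th w ^+ 2).
Proof.
move=> [sA _] eA.
have -> : hs2 A = \sum_i covmat P X Y th i i.
  rewrite /hs2; apply: eq_bigr => i _; rewrite -eA mxE.
  apply: eq_bigr => j _; rewrite expr2; congr (_ * _).
  by rewrite -[in RHS]sA mxE.
apply: (@le_trans _ _ (\sum_i Ex P (fun w => r th w ^+ 2 * (X i w * X i w)))).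
  apply: ler_sum => i _; rewrite covmatE gerBl -expr2; exact: sqr_ge0.
rewrite -Ex_sum; last by move=> i; exact: I1rrXX.
rewrite -[X in _ <= X](@ExZ _ _ _ P); last by case: (Sr th).
apply: Ex_le_ae.
- by apply: I1_sum => i; exact: I1rrXX.
- by apply: I1Z; case: (Sr th).
apply: filterS hK => w h.
have -> : \sum_i r th w ^+ 2 * (X i w * X i w) = r th w ^+ 2 * \sum_i X i w ^+ 2.
  by rewrite mulr_sumr; apply: eq_bigr => i _; rewrite expr2.
by rewrite mulrC; apply: ler_wpM2r => //; exact: sqr_ge0.
Qed.

Lemma rdiff th eta w : r th w - r eta w = \sum_i (th - eta) i 0 * X i w.
Proof.
rewrite /r /resid.
have -> : \sum_i (th - eta) i 0 * X i w =
  \sum_i th i 0 * X i w - \sum_i eta i 0 * X i w.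
  by rewrite -sumrB; apply: eq_bigr => i _; rewrite !mxE; ring.
ring.
Qed.

Lemma qE th eta : qm (Sigma P X) (th - eta) = Ex P (fun w => (r th w - r eta w) ^+ 2).
Proof.
set u := th - eta.
rewrite /qm bilE.
transitivity (\sum_i \sum_j Ex P (fun w => u i 0 * u j 0 * (X i w * X j w))).
  apply: eq_bigr => i _; apply: eq_bigr => j _.
  rewrite SigmaE ExZ; first by ring.
  exact: S2_I1 (SX i) (SX j).
transitivity (\sum_i Ex P (fun w => \sum_j u i 0 * u j 0 * (X i w * X j w))).
  apply: eq_bigr => i _; rewrite Ex_sum // => j.
  apply: I1Z; exact: S2_I1 (SX i) (SX j).
rewrite -Ex_sum; last first.
  move=> i; apply: I1_sum => j; apply: I1Z; exact: S2_I1 (SX i) (SX j).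
apply: Ex_eq => w; rewrite rdiff expr2 mulr_suml; apply: eq_bigr => i _.
by rewrite mulr_sumr; apply: eq_bigr => j _; ring.
Qed.


Lemma sq3 (a b c : R) : (a - b - c) ^+ 2 <= 3 * (a ^+ 2 + b ^+ 2 + c ^+ 2).
Proof.
rewrite -subr_ge0.
have -> : 3 * (a ^+ 2 + b ^+ 2 + c ^+ 2) - (a - b - c) ^+ 2 =
  (a + b) ^+ 2 + (a + c) ^+ 2 + (b - c) ^+ 2 by ring.
by rewrite !addr_ge0 ?sqr_ge0.
Qed.

Lemma hs2E_bound th eta :
  hs2 (covmat P X Y th - covmat P X Y eta) <=
  9 * K ^+ 2 * Ex P (fun w => (r th w - r eta w) ^+ 2) *
  (Ex P (fun w => r th w ^+ 2) + Ex P (fun w => r eta w ^+ 2)).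
Proof.
set E := covmat P X Y th - covmat P X Y eta.
set s := fun w => r th w - r eta w.
set h := fun w => r th w + r eta w.
have Ss : S2 P s := S2B (Sr th) (Sr eta).
have Sh : S2 P h := S2D (Sr th) (Sr eta).
set mt := m th; set me := m eta.
set a := Ex P (fun w => r th w ^+ 2); set b := Ex P (fun w => r eta w ^+ 2).
have e2 i : Ex P (fun w => s w * X i w) = mt i - me i.
  rewrite /mt /me /m -ExB; try exact: S2_I1 (Sr _) (SX i).
  by apply: Ex_eq => w; rewrite /s; ring.
have Eij i j : E i j = Ex P (fun w => s w * (h w * (X i w * X j w)))
   - Ex P (fun w => s w * X i w) * mt j - me i * Ex P (fun w => s w * X j w).
  have e1 : Ex P (fun w => s w * (h w * (X i w * X j w))) =
     Ex P (fun w => r th w ^+ 2 * (X i w * X j w)) -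
     Ex P (fun w => r eta w ^+ 2 * (X i w * X j w)).
    rewrite -ExB; try exact: I1rrXX.
    by apply: Ex_eq => w; rewrite /s /h; ring.
  have sub_ij (A B : 'M[R]_d) : (A - B) i j = A i j - B i j by rewrite !mxE.
  rewrite e1 !e2 /E sub_ij !covmatE /mt /me; ring.
set g := fun i j w => E i j * (h w * (X i w * X j w)) - E i j * mt j * X i w
   - E i j * me i * X j w.
have Sg i j : S2 P (g i j).
  have := S2B (S2B (S2Z (E i j) (S2hXX i j Sh)) (S2Z (E i j * mt j) (SX i)))
             (S2Z (E i j * me i) (SX j)).
  by congr S2; apply: funext => w; rewrite /g; ring.
set G := fun w => \sum_i \sum_j g i j w.
have SG : S2 P G.
  by apply: S2_sum => i; apply: S2_sum => j; exact: Sg.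
have I1sX i : I1 P (fun w => s w * X i w) by exact: S2_I1 Ss (SX i).
have I1shXX i j : I1 P (fun w => s w * (h w * (X i w * X j w))).
  exact: S2_I1 Ss (S2hXX i j Sh).
have esg i j : Ex P (fun w => s w * g i j w) = E i j ^+ 2.
  transitivity (Ex P (fun w => (E i j * (s w * (h w * (X i w * X j w)))
     - (E i j * mt j) * (s w * X i w)) - (E i j * me i) * (s w * X j w))).
    by apply: Ex_eq => w; rewrite /g; ring.
  rewrite !ExB ?ExZ //; try (apply: I1B); try (apply: I1Z); try exact: I1shXX; try exact: I1sX.
  by rewrite expr2 [X in _ = _ * X]Eij; ring.
have hsE : hs2 E = Ex P (fun w => s w * G w).
  transitivity (\sum_i \sum_j Ex P (fun w => s w * g i j w)).
    by apply: eq_bigr => i _; apply: eq_bigr => j _; rewrite esg.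
  transitivity (\sum_i Ex P (fun w => \sum_j s w * g i j w)).
    apply: eq_bigr => i _; rewrite Ex_sum // => j; exact: S2_I1 Ss (Sg i j).
  rewrite -Ex_sum; last first.
    by move=> i; apply: I1_sum => j; exact: S2_I1 Ss (Sg i j).
  apply: Ex_eq => w; rewrite /G mulr_sumr; apply: eq_bigr => i _.
  by rewrite mulr_sumr.
set HE := hs2 E.
have HE0 : 0 <= HE := hs2_ge0 E.
have k0 := K0.
have hmt : hsq mt <= K * a := m2_bound th.
have hme : hsq me <= K * b := m2_bound eta.
set B := fun w => (3 * HE * 2 * K ^+ 2) * r th w ^+ 2 +
  ((3 * HE * 2 * K ^+ 2) * r eta w ^+ 2 + 3 * HE * (K * hsq mt + K * hsq me)).
have aeG : {ae P, forall w, G w ^+ 2 <= B w}.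
  apply: filterS hK => w hn.
  set n := \sum_i X i w ^+ 2.
  have n0 : 0 <= n by apply: sumr_ge0 => i _; exact: sqr_ge0.
  set Z := \sum_i \sum_j E i j * (X i w * X j w).
  set V1 := \sum_i \sum_j E i j * (X i w * mt j).
  set V2 := \sum_i \sum_j E i j * (me i * X j w).
  have eG : G w = h w * Z - V1 - V2.
    rewrite /G /Z /V1 /V2 mulr_sumr -!sumrB; apply: eq_bigr => i _.
    by rewrite mulr_sumr -!sumrB; apply: eq_bigr => j _; rewrite /g; ring.
  have hZ : Z ^+ 2 <= HE * (n * n) := cs_W E (fun i => X i w) (fun j => X j w).
  have hV1 : V1 ^+ 2 <= HE * (n * hsq mt) := cs_W E (fun i => X i w) mt.
  have hV2 : V2 ^+ 2 <= HE * (hsq me * n) := cs_W E me (fun j => X j w).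
  have nn : n * n <= K ^+ 2 by rewrite expr2; apply: ler_pM.
  have hZ' : Z ^+ 2 <= HE * K ^+ 2.
    by apply: le_trans hZ _; apply: ler_wpM2l.
  have hV1' : V1 ^+ 2 <= HE * K * hsq mt.
    apply: le_trans hV1 _; rewrite -mulrA; apply: ler_wpM2l => //.
    by apply: ler_wpM2r => //; apply: sumr_ge0 => i _; exact: sqr_ge0.
  have hV2' : V2 ^+ 2 <= HE * K * hsq me.
    apply: le_trans hV2 _; rewrite -mulrA; apply: ler_wpM2l => //.
    rewrite mulrC; apply: ler_wpM2r => //; apply: sumr_ge0 => i _; exact: sqr_ge0.
  have hh : h w ^+ 2 <= 2 * r th w ^+ 2 + 2 * r eta w ^+ 2.
    rewrite -subr_ge0 (_ : _ - _ = (r th w - r eta w) ^+ 2); first exact: sqr_ge0.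
    by rewrite /h; ring.
  have hZ2 : (h w * Z) ^+ 2 <= (2 * r th w ^+ 2 + 2 * r eta w ^+ 2) * (HE * K ^+ 2).
    rewrite exprMn; apply: ler_pM => //; exact: sqr_ge0.
  rewrite eG; apply: le_trans (sq3 _ _ _) _.
  have -> : B w = 3 * ((2 * r th w ^+ 2 + 2 * r eta w ^+ 2) * (HE * K ^+ 2)
                  + HE * K * hsq mt + HE * K * hsq me) by rewrite /B; ring.
  apply: ler_wpM2l => //.
  by apply: lerD; [apply: lerD|].
have [_ Ith] := Sr th; have [_ Ieta] := Sr eta.
have hEG : Ex P (fun w => G w ^+ 2) <= Ex P B.
  by apply: Ex_le_ae => //; [case: SG|apply: I1D; [|apply: I1D]; try apply: I1Z; try exact: I1_cst].
have hEB : Ex P B = (3 * HE * 2 * K ^+ 2) * a +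
  ((3 * HE * 2 * K ^+ 2) * b + 3 * HE * (K * hsq mt + K * hsq me)).
  rewrite /B ExD; [|by apply: I1Z|by apply: I1D; [apply: I1Z|apply: I1_cst]].
  rewrite ExD; [|by apply: I1Z|by apply: I1_cst].
  rewrite ExZ // ExZ //.
  have hc : Ex P (fun _ => 3 * HE * (K * hsq mt + K * hsq me)) =
    3 * HE * (K * hsq mt + K * hsq me) by exact: Ex_cst.
  by rewrite hc.
have hB : Ex P B <= 9 * K ^+ 2 * (a + b) * HE.
  rewrite hEB.
  have : K * hsq mt + K * hsq me <= K * (K * a) + K * (K * b).
    by apply: lerD; apply: ler_wpM2l.
  move=> hk.
  have : 3 * HE * (K * hsq mt + K * hsq me) <= 3 * HE * (K * (K * a) + K * (K * b)).
    by apply: ler_wpM2l => //; rewrite mulr_ge0.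
  move=> hk2.
  apply: le_trans (lerD (lexx _) (lerD (lexx _) hk2)) _.
  by rewrite le_eqVlt; apply/orP; left; apply/eqP; ring.
have cs := Ex_cs Ss SG; rewrite -hsE -/HE in cs.
have q0 : 0 <= Ex P (fun w => s w ^+ 2) by apply: Ex_ge0 => w; exact: sqr_ge0.
have a0 : 0 <= a by apply: Ex_ge0 => w; exact: sqr_ge0.
have b0 : 0 <= b by apply: Ex_ge0 => w; exact: sqr_ge0.
apply: sq_le => //; first by rewrite !mulr_ge0 // ?addr_ge0 // sqr_ge0.
apply: le_trans cs _.
have := ler_wpM2l q0 (le_trans hEG hB).
move=> hq; apply: le_trans hq _.
by rewrite le_eqVlt; apply/orP; left; apply/eqP; rewrite /s; ring.
Qed.


Lemma main_bound (a : R) (ha : 0 < a)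
  (hsig : forall th : 'cV[R]_d,
     loewner_ge (sigma_noise P X Y th ^+ 2) ((a ^+ 2 * Lrisk P X Y th)%:M))
  (hL : forall th : 'cV[R]_d, a ^+ 2 <= Lrisk P X Y th) :
  (0 < d)%N ->
  exists2 c : R, 0 < c &
    forall th eta : 'cV[R]_d,
      hs2 (sigma_noise P X Y th - sigma_noise P X Y eta)
      <= 2 * c * K * ((th - eta)^T *m Sigma P X *m (th - eta)) 0 0.
Proof.
move=> dpos.
set v1 : 'cV[R]_d := const_mx 1.
have nv1 : 0 < nv v1 by rewrite nv_const1 ltr0n.
have Lpos th : 0 < Lrisk P X Y th.
  by apply: lt_le_trans (hL th); rewrite exprn_gt0.
have al_pos th : 0 < a ^+ 2 * Lrisk P X Y th by rewrite mulr_gt0 ?exprn_gt0.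
have sigP th : psd (sigma_noise P X Y th) /\ sigma_noise P X Y th *m sigma_noise P X Y th = covmat P X Y th.
  have := hsig th; rewrite /sigma_noise /psd_sqrt.
  case: xgetP => [A _ hA _|hn]; first exact: hA.
  move=> [_ h]; have := h v1; rewrite loewE.
  have -> : qm ((0 : 'M[R]_d) *m 0) v1 = 0 by rewrite /qm !mulmx0 !mul0mx mxE.
  rewrite sub0r oppr_ge0 => h'; exfalso.
  by move: h'; rewrite leNgt mulr_gt0 ?al_pos.
have hal th : forall v, a ^+ 2 * Lrisk P X Y th * nv v <=
    qm (sigma_noise P X Y th *m sigma_noise P X Y th) v.
  move=> v; have [_ h] := hsig th; have := h v.
  by rewrite loewE subr_ge0.
have key th : forall v, (a ^+ 2 * Lrisk P X Y th) ^+ 2 * nv v ^+ 2 <=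
    (K * Ex P (fun w => r th w ^+ 2)) * qm (sigma_noise P X Y th) v ^+ 2.
  have [pA eA] := sigP th.
  apply: key_sqrt => //; [exact: ltW | exact: hs2_sig_bound].
have apos th : 0 < Ex P (fun w => r th w ^+ 2).
  by have := Lpos th; rewrite LriskE; rewrite pmulr_lgt0 // invr_gt0.
have Kpos : 0 < K.
  rewrite lt_def K0 andbT; apply/negP => /eqP K00.
  have := key 0 v1; rewrite K00 !mul0r.
  by rewrite leNgt mulr_gt0 ?exprn_gt0 ?al_pos.
have Mpos th : 0 < K * Ex P (fun w => r th w ^+ 2) by rewrite mulr_gt0.
set kap := fun th => Num.sqrt ((a ^+ 2 * Lrisk P X Y th) ^+ 2 /
                               (K * Ex P (fun w => r th w ^+ 2))).
have hk th : forall v, kap th * nv v <= qm (sigma_noise P X Y th) v.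
  move=> v; apply: from_sq; [exact: qm_ge0 (sigP th).1|exact: nv_ge0|exact: Mpos|exact: key].
have kap2 th : kap th ^+ 2 = a ^+ 4 * Ex P (fun w => r th w ^+ 2) / (4 * K).
  rewrite /kap sqr_sqrtr; last by rewrite divr_ge0 ?sqr_ge0 // ltW.
  rewrite LriskE; field.
  by rewrite (gt_eqF (apos th)) (gt_eqF Kpos).
have kap0 th : 0 <= kap th by exact: sqrtr_ge0.
exists (18 * K ^+ 2 / a ^+ 4).
  by rewrite !mulr_gt0 ?invr_gt0 ?exprn_gt0.
move=> th eta.
have [pA eA] := sigP th; have [pB eB] := sigP eta.
set A := sigma_noise P X Y th; set B := sigma_noise P X Y eta.
set D := A - B.
have tr := tr_id A B; rewrite eA eB -/D in tr.
set Ec := covmat P X Y th - covmat P X Y eta.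
set tt := \sum_i \sum_j D i j * Ec i j.
have l1 := lower_cols D (hk th); rewrite -/A in l1.
have l2 := lower_rows D (hk eta); rewrite -/B in l2.
have htt : (kap th + kap eta) * hs2 D <= tt.
  by rewrite /tt tr mulrDl; apply: lerD.
have hcs : tt ^+ 2 <= hs2 D * hs2 Ec := tr_cs D Ec.
have HD0 : 0 <= hs2 D := hs2_ge0 D.
have q0 : 0 <= ((th - eta)^T *m Sigma P X *m (th - eta)) 0 0.
  by rewrite qmE qE; apply: Ex_ge0 => w; exact: sqr_ge0.
have hEc := hs2E_bound th eta; rewrite -/Ec -qE in hEc.
rewrite qmE; rewrite qmE in q0.
set q := qm (Sigma P X) (th - eta) in q0 hEc *.
have [HD00|HDne] := eqVneq (hs2 D) 0.
  rewrite HD00; apply: mulr_ge0 => //; apply: ltW; by rewrite !mulr_gt0 ?invr_gt0 ?exprn_gt0.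
have HDp : 0 < hs2 D by rewrite lt_def HDne HD0.
have k0 : 0 <= (kap th + kap eta) * hs2 D by rewrite mulr_ge0 ?addr_ge0.
have h1 : ((kap th + kap eta) * hs2 D) ^+ 2 <= hs2 D * hs2 Ec.
  apply: le_trans hcs; rewrite !expr2; apply: ler_pM => //.
have h2 : (kap th + kap eta) ^+ 2 * hs2 D <= hs2 Ec.
  rewrite -(ler_pM2r HDp) [X in _ <= X]mulrC.
  by apply: le_trans h1; rewrite le_eqVlt; apply/orP; left; apply/eqP; ring.
have h3 : (kap th ^+ 2 + kap eta ^+ 2) * hs2 D <= (kap th + kap eta) ^+ 2 * hs2 D.
  apply: ler_wpM2r => //; rewrite -subr_ge0.
  have -> : (kap th + kap eta) ^+ 2 - (kap th ^+ 2 + kap eta ^+ 2) = 2 * (kap th * kap eta)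
    by ring.
  by rewrite mulr_ge0 ?mulr_ge0.
rewrite !kap2 in h3.
set ath := Ex P (fun w => r th w ^+ 2) in h3 hEc.
set aeta := Ex P (fun w => r eta w ^+ 2) in h3 hEc.
have Spos : 0 < ath + aeta by rewrite addr_gt0 ?apos.
have h4 : (a ^+ 4 * (ath + aeta) / (4 * K)) * hs2 D <= 9 * K ^+ 2 * q * (ath + aeta).
  apply: le_trans hEc; apply: le_trans h2; apply: le_trans h3.
  by rewrite le_eqVlt; apply/orP; left; apply/eqP; field; rewrite gt_eqF.
have a4 : 0 < a ^+ 4 by rewrite exprn_gt0.
have -> : hs2 D = ((a ^+ 4 * (ath + aeta) / (4 * K)) * hs2 D) * (4 * K / (a ^+ 4 * (ath + aeta))).
  by field; rewrite !gt_eqF.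
apply: le_trans (ler_wpM2r _ h4) _.
  by rewrite !mulr_ge0 ?invr_ge0 ?ltW ?mulr_gt0.
by rewrite le_eqVlt; apply/orP; left; apply/eqP; field; rewrite !gt_eqF.
Qed.

End Model2.

Theorem lemma5p3 (dT : measure_display) (T : measurableType dT) (R : realType)
  (P : probability T R) (d : nat) (X : 'I_d -> {RV P >-> R}) (Y : {RV P >-> R})
  (K : R)
  (hK : {ae P, forall w, \sum_i (X i w) ^+ 2 <= K})
  (hY : P.-integrable setT (fun w => ((Y w) ^+ 2)%:E))
  (a : R) (ha : 0 < a)
  (hsig : forall theta : 'cV[R]_d,
     loewner_ge (sigma_noise P (fun i => X i) Y theta ^+ 2)
                ((a ^+ 2 * Lrisk P (fun i => X i) Y theta)%:M))
  (hL : forall theta : 'cV[R]_d, a ^+ 2 <= Lrisk P (fun i => X i) Y theta) :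
  exists2 c : R, 0 < c &
    forall theta eta : 'cV[R]_d,
      hs2 (sigma_noise P (fun i => X i) Y theta - sigma_noise P (fun i => X i) Y eta)
      <= 2 * c * K *
         ((theta - eta)^T *m Sigma P (fun i => X i) *m (theta - eta)) 0 0.
Proof.
have [d0|dpos] := posnP d.
  exists 1 => // th eta.
  have nod (i : 'I_d) : False by case: i => i hi; move: hi; rewrite d0.
  have -> : hs2 (sigma_noise P (fun i => X i) Y th - sigma_noise P (fun i => X i) Y eta) = 0.
    by rewrite /hs2 big1 // => i; case: (nod i).
  rewrite bilE big1 ?mulr0 // => i; case: (nod i).
have mX : forall i, measurable_fun setT ((fun i => X i : T -> R) i).
  by move=> i; exact: (@measurable_funPT _ _ _ _ (X i)).
have mY : measurable_fun setT (Y : T -> R) by exact: (@measurable_funPT _ _ _ _ Y).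
have H := (@main_bound dT T R P d (fun i => X i) Y K mX mY hK hY a ha hsig hL dpos).
exact H.
Qed.
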